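(* Let $\mathcal{O}$ be a nonempty set of quantum channels on $n$ qubits closed under composition, $\Psi$ a channel on $n$ qubits with $\gamma(\Psi)<\infty$, and $k\ge0$ an integer. Then for every sample $S=(z_1,\ldots,z_m)$, \[ \bar{R}_S(\mathcal{F}(\mathcal{O}))\le\bar{R}_S(\mathcal{F}(\mathcal{O}^{(k)}_\Psi))\le\gamma^*\bar{R}_S(\mathcal{F}(\mathcal{O})),\qquad \bar{G}_S(\mathcal{F}(\mathcal{O}))\le\bar{G}_S(\mathcal{F}(\mathcal{O}^{(k)}_\Psi))\le\gamma^*\bar{G}_S(\mathcal{F}(\mathcal{O})), \] where $\gamma^*=\min\{(1+2\gamma(\Psi))^k,1+2\gamma_{\max,n}\}$.
   Context: A quantum channel on $n$ qubits is a completely positive trace-preserving linear map on $2^n\times2^n$ complex matrices. For a channel $\Phi$, $f_\Phi(x,y)=\mathrm{Tr}[\Phi(|x\rangle\langle x|)\,|y\rangle\langle y|]$; $\mathcal{F}(\Omega)=\{f_\Phi:\Phi\in\Omega\}$. $\bar{R}_S(\mathcal{G})=\mathbb{E}\sup_{h\in\mathcal{G}}\frac1m|\sum_{i=1}^m\epsilon_i h(z_i)|$ with $\epsilon_i$ i.i.d. uniform on $\{\pm1\}$, and $\bar{G}_S(\mathcal{G})=\mathbb{E}\sup_{h\in\mathcal{G}}\frac1m|\sum_{i=1}^m g_i h(z_i)|$ with $g_i$ i.i.d. $\mathcal{N}(0,1)$. Free robustness w.r.t. $\mathcal{O}$: $\gamma(\Phi)=\inf\{\lambda\ge0:\exists\,\Phi'\in\mathrm{Conv}(\mathcal{O}),\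 (\Phi+\lambda\Phi')/(1+\lambda)\in\mathrm{Conv}(\mathcal{O})\}$; $\gamma_{\max,n}=\sup$ of $\gamma(\Phi)$ over all channels on $n$ qubits (if infinite, $\gamma^*=(1+2\gamma(\Psi))^k$). $\mathcal{O}^{(k)}_\Psi$ is the set of all finite compositions of elements of $\mathcal{O}\cup\{\Psi\}$ in which $\Psi$ appears at most $k$ times. *)

(* Defs.v *)
From HB Require Import structures.
From mathcomp Require Import all_boot all_order all_algebra.
From mathcomp Require Import all_classical all_reals all_analysis.
From mathcomp Require Import complex.
Set Implicit Arguments. Unset Strict Implicit. Unset Printing Implicit Defensive.
Import Order.TTheory GRing.Theory Num.Theory.
Local Open Scope classical_set_scope.
Local Open Scope ring_scope.
Local Open Scope complex_scope.

(* Linear maps on N x N complex matrices (N = 2^n for n qubits);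
   complex numbers are R[i] for a real field R. *)
Definition qmap (R : realType) (N : nat) := 'M[R[i]]_N -> 'M[R[i]]_N.

Definition psd (R : realType) (T : finType) (A : T -> T -> R[i]) : Prop :=
  forall v : T -> R[i], 0 <= \sum_i \sum_j (v i)^* * A i j * v j.

(* (id_k \otimes Phi) acting on M_k \otimes M_N, elements of which are
   matrices indexed by 'I_k * 'I_N, applying Phi blockwise *)
Definition ampl (R : realType) (N k : nat) (Phi : qmap R N)
  (X : 'I_k * 'I_N -> 'I_k * 'I_N -> R[i]) : 'I_k * 'I_N -> 'I_k * 'I_N -> R[i] :=
  fun p q => Phi (\matrix_(i, j) X (p.1, i) (q.1, j)) p.2 q.2.

Definition is_linear_map (R : realType) (N : nat) (Phi : qmap R N) : Prop :=
  forall (a : R[i]) (X Y : 'M[R[i]]_N), Phi (a *: X + Y) = a *: Phi X + Phi Y.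

Definition completely_positive (R : realType) (N : nat) (Phi : qmap R N) : Prop :=
  forall (k : nat) (X : 'I_k * 'I_N -> 'I_k * 'I_N -> R[i]),
    psd X -> psd (ampl Phi X).

Definition trace_preserving (R : realType) (N : nat) (Phi : qmap R N) : Prop :=
  forall X : 'M[R[i]]_N, \tr (Phi X) = \tr X.

Definition channel (R : realType) (N : nat) (Phi : qmap R N) : Prop :=
  [/\ is_linear_map Phi, completely_positive Phi & trace_preserving Phi].

Definition conv (R : realType) (N : nat) (O : set (qmap R N)) : set (qmap R N) :=
  [set Phi | exists (p : nat) (w : 'I_p -> R) (Phis : 'I_p -> qmap R N),
     [/\ forall i, 0 <= w i, \sum_i w i = 1, forall i, O (Phis i) &
         Phi = fun X => \sum_i (w i)%:C *: Phis i X]].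

(* free robustness of Phi w.r.t. O (inf of the empty set is +oo) *)
Definition robustness (R : realType) (N : nat) (O : set (qmap R N)) (Phi : qmap R N)
  : \bar R :=
  ereal_inf [set l%:E | l in [set l : R | 0 <= l /\
     exists Phi', conv O Phi' /\
       conv O (fun X => ((1 + l)^-1)%:C *: (Phi X + l%:C *: Phi' X))]].

Definition gamma_max (R : realType) (N : nat) (O : set (qmap R N)) : \bar R :=
  ereal_sup [set robustness O Phi | Phi in [set Phi : qmap R N | channel Phi]].

(* gamma^* = min{(1+2 gamma(Psi))^k, 1 + 2 gamma_max} (used when gamma(Psi) < oo) *)
Definition gamma_star (R : realType) (N : nat) (O : set (qmap R N)) (Psi : qmap R N)
  (k : nat) : \bar R :=
  mine (((1 + 2 * fine (robustness O Psi)) ^+ k)%:E) (1 + 2 * gamma_max O)%E.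

(* O^{(k)}_Psi : nonempty finite compositions of elements of O u {Psi}, where
   each factor is tagged Some phi (phi in O) or None (an occurrence of Psi),
   with at most k occurrences of Psi *)
Definition compose_seq (R : realType) (N : nat) (Psi : qmap R N)
  (s : seq (option (qmap R N))) : qmap R N :=
  foldr (fun o acc => (if o is Some phi then phi else Psi) \o acc) id s.

Definition Ok (R : realType) (N : nat) (O : set (qmap R N)) (Psi : qmap R N)
  (k : nat) : set (qmap R N) :=
  [set Phi | exists s : seq (option (qmap R N)),
     [/\ (0 < size s)%N,
         (forall i, (i < size s)%N -> if nth None s i is Some phi then O phi else True),
         (count (fun o => if o is None then true else false) s <= k)%N &
         Phi = compose_seq Psi s]].

(* f_Phi(x,y) = Tr[Phi(|x><x|) |y><y|] = Phi(E_xx)_{yy} (a real number for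
   channels; we take its real part) *)
Definition fPhi (R : realType) (N : nat) (Phi : qmap R N) : 'I_N * 'I_N -> R :=
  fun z => complex.Re (Phi (delta_mx z.1 z.1) z.2 z.2).

Definition Fcls (R : realType) (N : nat) (O : set (qmap R N)) : set ('I_N * 'I_N -> R) :=
  [set fPhi Phi | Phi in O].

Definition rademacher (R : realType) (T : Type) (m : nat) (S : 'I_m -> T)
  (G : set (T -> R)) : \bar R :=
  (((2 ^ m)%:R : R)^-1)%:E *
  (\sum_(eps : {ffun 'I_m -> bool})
     ereal_sup [set ((m%:R)^-1 * `|\sum_(i < m) (-1) ^+ eps i * h (S i)|)%:E
               | h in G])%E.

(* expectation over i.i.d. standard Gaussians g_0, ..., g_{m-1}
   (iterated integrals against the N(0,1) law) *)
Fixpoint gauss_exp (R : realType) (m : nat) (F : (nat -> R) -> \bar R) : \bar R :=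
  match m with
  | 0 => F (fun _ => 0)
  | m'.+1 => (\int[normal_prob 0 1]_x
                gauss_exp m' (fun g => F (fun i => if i is j.+1 then g j else x)))%E
  end.

Definition gaussian (R : realType) (T : Type) (m : nat) (S : 'I_m -> T)
  (G : set (T -> R)) : \bar R :=
  gauss_exp m (fun g =>
     ereal_sup [set ((m%:R)^-1 * `|\sum_(i < m) g i * h (S i)|)%:E | h in G]).

(* Main.v *)
Require Import Defs.
From HB Require Import structures.
From mathcomp Require Import all_boot all_order all_algebra.
From mathcomp Require Import all_classical all_reals all_analysis.
From mathcomp Require Import complex.
From Stdlib Require List.
From mathcomp Require Import ring lra.
Import Order.TTheory GRing.Theory Num.Theory.
Local Open Scope classical_set_scope.
Local Open Scope ring_scope.
Local Open Scope complex_scope.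

Section Alg.
Variables (R : realType) (N : nat) (O : set (qmap R N)).
Hypothesis Olin : forall Phi, O Phi -> is_linear_map Phi.
Hypothesis Ocomp : forall Phi1 Phi2, O Phi1 -> O Phi2 -> O (Phi1 \o Phi2).

Lemma ReD (x y : R[i]) : complex.Re (x + y) = complex.Re x + complex.Re y.
Proof. by case: x; case: y. Qed.

Lemma ReMC (r : R) (x : R[i]) : complex.Re (r%:C * x) = r * complex.Re x.
Proof. case: x => a b /=. by rewrite mul0r subr0. Qed.

Lemma Re0 : complex.Re (0 : R[i]) = 0.
Proof. by []. Qed.

Lemma lin0 (Phi : qmap R N) : is_linear_map Phi -> Phi 0 = 0.
Proof.
move=> h; have := h 1 0 0; rewrite !scale1r addr0 => e.
by apply: (addrI (Phi 0)); rewrite addr0 -e.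
Qed.

Lemma linZ (Phi : qmap R N) a X : is_linear_map Phi -> Phi (a *: X) = a *: Phi X.
Proof. by move=> h; have := h a X 0; rewrite (lin0 Phi h) !addr0. Qed.

Lemma linD (Phi : qmap R N) X Y : is_linear_map Phi -> Phi (X + Y) = Phi X + Phi Y.
Proof. by move=> h; have := h 1 X Y; rewrite !scale1r. Qed.

Lemma lin_sum (Phi : qmap R N) (I : Type) (s : seq I) (F : I -> 'M[R[i]]_N) :
  is_linear_map Phi -> Phi (\sum_(x <- s) F x) = \sum_(x <- s) Phi (F x).
Proof.
move=> h; elim: s => [|x s IH]; first by rewrite !big_nil lin0.
by rewrite !big_cons linD // IH.
Qed.

Definition comb (s : seq (R * qmap R N)) : qmap R N :=
  fun X => \sum_(x <- s) (x.1)%:C *: x.2 X.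
Definition wt (s : seq (R * qmap R N)) : R := \sum_(x <- s) `|x.1|.
Definition rep (c : R) (Phi : qmap R N) :=
  exists s, (forall x, List.In x s -> O x.2) /\ wt s <= c /\ Phi = comb s.

Lemma wt_ge0 s : 0 <= wt s.
Proof. by rewrite /wt; apply: sumr_ge0 => x _. Qed.

Lemma rep_le c c' Phi : rep c Phi -> c <= c' -> rep c' Phi.
Proof.
by move=> [s [h1 [h2 h3]]] cc; exists s; split => //; split => //; exact: le_trans cc.
Qed.

Lemma rep_O Phi : O Phi -> rep 1 Phi.
Proof.
move=> h; exists [:: (1, Phi)]; split; first by move=> x [<-|].
split; first by rewrite /wt big_cons big_nil normr1 addr0.
apply: funext => X; rewrite /comb big_cons big_nil addr0 /=.
by rewrite rmorph1 scale1r.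
Qed.

Lemma rep_scale c Phi r : rep c Phi -> rep (`|r| * c) (fun X => r%:C *: Phi X).
Proof.
move=> [s [h1 [h2 ->]]].
exists [seq (r * x.1, x.2) | x <- s]; split.
  move=> x /List.in_map_iff [y [<- hy]] /=; exact: h1.
split.
  rewrite /wt big_map; under eq_bigr do rewrite normrM.
  by rewrite -mulr_sumr ler_wpM2l.
apply: funext => X; rewrite /comb big_map scaler_sumr; apply: eq_bigr => x _ /=.
by rewrite rmorphM scalerA.
Qed.

Lemma rep_add c1 c2 P1 P2 : rep c1 P1 -> rep c2 P2 ->
  rep (c1 + c2) (fun X => P1 X + P2 X).
Proof.
move=> [s1 [h1 [h2 ->]]] [s2 [g1 [g2 ->]]].
exists (s1 ++ s2); split.
  by move=> x /List.in_app_iff [] ?; [exact: h1 | exact: g1].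
split; first by rewrite /wt big_cat lerD.
by apply: funext => X; rewrite /comb big_cat.
Qed.

Lemma in_allpairs (A B C : Type) (f : A -> B -> C) s t z :
  List.In z [seq f x y | x <- s, y <- t] ->
  exists x y, [/\ List.In x s, List.In y t & z = f x y].
Proof.
elim: s => [|x s IH] //=.
move/List.in_app_iff => [/List.in_map_iff [y [<- hy]] | /IH [x' [y [h1 h2 ->]]]].
  by exists x, y; split => //; left.
by exists x', y; split => //; right.
Qed.

Lemma rep_comp c1 c2 P1 P2 : rep c1 P1 -> rep c2 P2 -> rep (c1 * c2) (P1 \o P2).
Proof.
move=> [s1 [h1 [h2 ->]]] [s2 [g1 [g2 ->]]].
exists [seq (x.1 * y.1, x.2 \o y.2) | x <- s1, y <- s2]; split.
  move=> z hz; have [x [y [hx hy ->]]] := @in_allpairs _ _ _ _ _ _ _ hz; rewrite /=.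
  by apply: Ocomp; [exact: h1 | exact: g1].
split.
  rewrite /wt big_allpairs_dep.
  apply: (@le_trans _ _ (wt s1 * wt s2)); last first.
    by apply: ler_pM => //; apply: wt_ge0.
  rewrite /wt mulr_suml; apply: ler_sum => x _; rewrite mulr_sumr.
  by apply: ler_sum => y _; rewrite normrM.
apply: funext => X; rewrite /comb /= big_allpairs_dep.
elim: s1 h1 {h2} => [|x s1 IH] h1; first by rewrite !big_nil.
rewrite !big_cons IH; last by move=> z hz; apply: h1; right.
congr (_ + _).
have lx : is_linear_map x.2 by apply/Olin/h1; left.
rewrite lin_sum // scaler_sumr; apply: eq_bigr => y _.
by rewrite linZ // scalerA rmorphM.
Qed.

Lemma rep_conv Phi : Defs.conv O Phi -> rep 1 Phi.
Proof.
move=> [p [w [Phis [w0 w1 hO ->]]]].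
exists [seq (w i, Phis i) | i <- enum 'I_p]; split.
  by move=> x /List.in_map_iff [i [<- _]] /=.
split.
  rewrite /wt big_map big_enum /= -w1; apply: ler_sum => i _; by rewrite ger0_norm.
by rewrite /comb; apply: funext => X; rewrite big_map big_enum.
Qed.

Lemma rep_robust (Phi Phi' : qmap R N) (l : R) : 0 <= l -> Defs.conv O Phi' ->
  Defs.conv O (fun X => ((1 + l)^-1)%:C *: (Phi X + l%:C *: Phi' X)) ->
  rep (1 + 2 * l) Phi.
Proof.
move=> l0 hP hC.
have := rep_add _ _ _ _ (rep_scale _ _ (1 + l) (rep_conv _ hC)) (rep_scale _ _ (- l) (rep_conv _ hP)).
have -> : `|1 + l| * 1 + `|- l| * 1 = 1 + 2 * l.
  by rewrite normrN !mulr1 !ger0_norm // ?addr_ge0 //; ring.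
suff -> : (fun X => (1 + l)%:C *: (((1 + l)^-1)%:C *: (Phi X + l%:C *: Phi' X))
   + (- l)%:C *: Phi' X) = Phi by [].
apply: funext => X; rewrite scalerA -rmorphM mulfV; last first.
  by rewrite gt_eqF // ltr_wpDr.
by rewrite rmorph1 scale1r rmorphN scaleNr addrK.
Qed.

Lemma fPhi_comb s z : fPhi (comb s) z = \sum_(x <- s) x.1 * fPhi x.2 z.
Proof.
rewrite /fPhi /comb summxE (big_morph _ ReD Re0); apply: eq_bigr => x _.
by rewrite mxE ReMC.
Qed.

Lemma rep_Ok (Psi : qmap R N) (l : R) s : 0 <= l -> rep (1 + 2 * l) Psi ->
  (0 < size s)%N ->
  (forall i, (i < size s)%N -> if nth None s i is Some phi then O phi else True) ->
  rep ((1 + 2 * l) ^+ count (fun o => if o is None then true else false) s)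
      (compose_seq Psi s).
Proof.
move=> l0 hPsi; elim: s => [|o s IH] //= _ hc.
have hc' : forall i, (i < size s)%N ->
    if nth None s i is Some phi then O phi else True by move=> i hi; exact: (hc i.+1 hi).
case: o hc => [phi|] hc /=.
  have ho : rep 1 phi by apply: rep_O; exact: (hc 0%N isT).
  rewrite add0n; clear hc; case: s IH hc' => [|o' s'] IH hc' /=.
    by rewrite expr0.
  have := rep_comp _ _ _ _ ho (IH isT hc'); rewrite mul1r; apply.
rewrite add1n exprS; clear hc; case: s IH hc' => [|o' s'] IH hc' /=.
  by rewrite expr0 mulr1.
exact: (rep_comp _ _ _ _ hPsi (IH isT hc')).
Qed.

Variables (m : nat) (S : 'I_m -> 'I_N * 'I_N).

Definition Lf (a : 'I_m -> R) (Phi : qmap R N) := \sum_(i < m) a i * fPhi Phi (S i).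

Lemma Lf_comb a s : Lf a (comb s) = \sum_(x <- s) x.1 * Lf a x.2.
Proof.
rewrite /Lf; under eq_bigr do rewrite fPhi_comb mulr_sumr.
rewrite exchange_big /=; apply: eq_bigr => x _; rewrite mulr_sumr.
by apply: eq_bigr => i _; rewrite mulrCA.
Qed.

Lemma rep_bound (a : 'I_m -> R) (k A c : R) Phi : 0 <= k -> 0 <= A ->
  (forall Phi, O Phi -> k * `|Lf a Phi| <= A) -> rep c Phi -> k * `|Lf a Phi| <= c * A.
Proof.
move=> k0 A0 hA [s [h1 [h2 ->]]].
apply: (@le_trans _ _ (wt s * A)); last by rewrite ler_wpM2r.
rewrite Lf_comb /wt; elim: s h1 {h2} => [|x s IH] h1.
  by rewrite !big_nil normr0 mulr0 mul0r.
rewrite !big_cons mulrDl.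
apply: (le_trans (ler_wpM2l k0 (ler_normD _ _))); rewrite mulrDr lerD //.
  by rewrite normrM mulrCA ler_wpM2l // hA //; apply: h1; left.
by apply: IH => y hy; apply: h1; right.
Qed.

End Alg.
Lemma pow_cont (R : realFieldType) (a : R) (K : nat) : 0 <= a ->
  exists C, 0 <= C /\ forall t, 0 <= t -> t <= 1 -> (a + t) ^+ K <= a ^+ K + t * C.
Proof.
move=> a0; elim: K => [|K [C [C0 hC]]].
  by exists 0; split => // t _ _; rewrite !expr0 mulr0 addr0.
exists (a ^+ K + (a + 1) * C); split.
  by rewrite addr_ge0 ?exprn_ge0 // mulr_ge0 // addr_ge0.
move=> t t0 t1; rewrite !exprS.
have P0 : 0 <= (a + t) ^+ K by rewrite exprn_ge0 // addr_ge0.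
have Q0 : 0 <= a ^+ K by rewrite exprn_ge0.
have h := hC t t0 t1.
have h1 : 0 <= (a + t) * (a ^+ K + t * C - (a + t) ^+ K).
  by apply: mulr_ge0; [rewrite addr_ge0 | rewrite subr_ge0].
have h2 : 0 <= (1 - t) * t * C by rewrite !mulr_ge0 // subr_ge0.
nra.
Qed.

Lemma lim_pow (R : realFieldType) (a A x : R) (K : nat) : 0 <= a -> 0 <= A ->
  (forall t, 0 < t -> x <= (a + t) ^+ K * A) -> x <= a ^+ K * A.
Proof.
move=> a0 A0 h; have [C [C0 hC]] := @pow_cont R a K a0.
apply/ler_addgt0Pr => d d0.
pose t := Num.min 1 (d / (C * A + 1)).
have CA0 : 0 < C * A + 1 by rewrite ltr_wpDl // mulr_ge0.
have t0 : 0 < t by rewrite lt_min ltr01 divr_gt0.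
have t1 : t <= 1 by rewrite ge_min lexx.
have t2 : t <= d / (C * A + 1) by rewrite ge_min lexx orbT.
have t3 : t * (C * A + 1) <= d by rewrite -ler_pdivlMr.
apply: (le_trans (h t t0)).
have := hC t (ltW t0) t1 => e.
apply: (le_trans (ler_wpM2r A0 e)).
have : t * C * A <= d by nra.
nra.
Qed.
Section Int.
Local Open Scope ereal_scope.
Import HBNNSimple.
Context d (T : measurableType d) (R : realType) (mu : {measure set T -> \bar R}).

Lemma int_le (f g : T -> \bar R) : (forall x, 0 <= f x) -> (forall x, f x <= g x) ->
  \int[mu]_x f x <= \int[mu]_x g x.
Proof.
move=> f0 fg.
have g0 : forall x, 0 <= g x by move=> x; exact: le_trans (f0 x) (fg x).
rewrite !ge0_integralTE //; apply: le_ereal_sup => _ [h hh <-].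
by exists h => // x; exact: le_trans (hh x) (fg x).
Qed.

Lemma int_scale (f : T -> \bar R) (c : R) : (0 < c)%R -> (forall x, 0 <= f x) ->
  \int[mu]_x (c%:E * f x) <= c%:E * \int[mu]_x f x.
Proof.
move=> c0 f0.
have cf0 : forall x, 0 <= c%:E * f x by move=> x; rewrite mule_ge0 // lee_fin ltW.
rewrite !ge0_integralTE //; apply: ge_ereal_sup => _ [h hh <-].
have ci0 : (0 <= c^-1)%R by rewrite invr_ge0 ltW.
pose h' := scale_nnsfun h ci0.
have hh' : forall x, (h' x)%:E <= f x.
  move=> x; rewrite /h' /=; have := hh x; have := f0 x.
  case: (f x) => [r||] //=; last by move=> _ _; rewrite leey.
  rewrite !lee_fin => _ hr; by rewrite mulrC ler_pdivrMr // mulrC.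
have -> : sintegral mu h = c%:E * sintegral mu h'.
  rewrite -sintegralrM; apply: eq_sintegral => x /=.
  by rewrite /h' /= mulrA mulfV ?mul1r // gt_eqF.
apply: lee_wpmul2l; first by rewrite lee_fin ltW.
by apply: ereal_sup_ubound; exists h'.
Qed.

End Int.

Section Gauss.
Local Open Scope ereal_scope.
Variable R : realType.

Lemma gexp_ge0 m (F : (nat -> R) -> \bar R) : (forall g, 0 <= F g) ->
  0 <= gauss_exp m F.
Proof.
elim: m F => [|m IH] F F0 /=; first exact: F0.
by apply: integral_ge0 => x _; apply: IH => g; exact: F0.
Qed.

Lemma gexp_le m (F G : (nat -> R) -> \bar R) : (forall g, 0 <= F g) ->
  (forall g, F g <= G g) -> gauss_exp m F <= gauss_exp m G.
Proof.
elim: m F G => [|m IH] F G F0 FG /=; first exact: FG.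
apply: int_le => x; first by apply: gexp_ge0 => g; exact: F0.
by apply: IH => g; [exact: F0 | exact: FG].
Qed.

Lemma gexp_scale m (F : (nat -> R) -> \bar R) (c : R) : (0 < c)%R ->
  (forall g, 0 <= F g) ->
  gauss_exp m (fun g => c%:E * F g) <= c%:E * gauss_exp m F.
Proof.
move=> c0; elim: m F => [|m IH] F F0 /=; first by [].
apply: le_trans; last first.
  apply: int_scale => // x; by apply: gexp_ge0 => g; exact: F0.
apply: int_le => x.
  by apply: gexp_ge0 => g; rewrite mule_ge0 // lee_fin ltW.
by apply: IH => g; exact: F0.
Qed.

End Gauss.

Lemma ampl_comp (R : realType) (N k : nat) (P1 P2 : qmap R N)
  (X : 'I_k * 'I_N -> 'I_k * 'I_N -> R[i]) :
  ampl (P1 \o P2) X = ampl P1 (ampl P2 X).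
Proof.
apply: funext => p; apply: funext => q; rewrite /ampl /=.
congr (P1 _ _ _); apply/matrixP => i j; rewrite !mxE /=.
by congr (P2 _ _ _); apply/matrixP => i' j'; rewrite !mxE.
Qed.

Lemma channel_comp (R : realType) (N : nat) (P1 P2 : qmap R N) :
  channel P1 -> channel P2 -> channel (P1 \o P2).
Proof.
move=> [l1 c1 t1] [l2 c2 t2]; split.
- by move=> a X Y /=; rewrite l2 l1.
- by move=> k X hX; rewrite ampl_comp; apply: c1; apply: c2.
- by move=> X /=; rewrite t1 t2.
Qed.

Section Main.
Variables (R : realType) (N : nat) (O : set (qmap R N)) (Psi : qmap R N)
  (K m : nat) (S : 'I_m -> 'I_N * 'I_N).
Hypotheses (O0 : O !=set0) (Och : forall Phi, O Phi -> channel Phi)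
  (Ocomp : forall Phi1 Phi2, O Phi1 -> O Phi2 -> O (Phi1 \o Phi2))
  (Pch : channel Psi) (Pfin : (robustness O Psi < +oo)%E).

Lemma Olin Phi : O Phi -> is_linear_map Phi.
Proof. by move/Och => [] . Qed.

Lemma Ok_channel Phi : Ok O Psi K Phi -> channel Phi.
Proof.
move=> [s [hs hc _ ->]]; elim: s hs hc => [|o s IH] //= _ hc.
have ho : channel (if o is Some phi then phi else Psi).
  by case: o hc => [phi|] hc //; apply: Och; exact: (hc 0%N isT).
case: s IH hc => [|o' s'] IH hc; first by [].
apply: channel_comp => //; apply: IH => // i hi; exact: (hc i.+1 hi).
Qed.

Lemma O_Ok : O `<=` Ok O Psi K.
Proof.
move=> Phi hPhi; exists [:: Some Phi]; split => //.
by case.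
Qed.

Lemma robust_ge0 Phi : (0 <= robustness O Phi)%E.
Proof.
by apply/ereal_infP => _ [l [l0 _] <-]; rewrite lee_fin.
Qed.

Lemma robust_rep Phi (e : R) : (robustness O Phi < e%:E)%E ->
  exists l, [/\ 0 <= l, l < e & @rep R N O (1 + 2 * l) Phi].
Proof.
move=> /ereal_inf_lt [_ [l [l0 [Phi' [h1 h2]]] <-]]; rewrite lte_fin => le.
exists l; split => //; exact: (@rep_robust R N O Phi Phi' l l0 h1 h2).
Qed.

End Main.

Section Final.
Variables (R : realType) (N : nat) (O : set (qmap R N)) (Psi : qmap R N)
  (K m : nat) (S : 'I_m -> 'I_N * 'I_N).
Hypotheses (O0 : O !=set0) (Och : forall Phi, O Phi -> channel Phi)
  (Ocomp : forall Phi1 Phi2, O Phi1 -> O Phi2 -> O (Phi1 \o Phi2))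
  (Pch : channel Psi) (Pfin : (robustness O Psi < +oo)%E).

Let OL : forall Phi, O Phi -> is_linear_map Phi.
Proof. by move=> Phi /Och []. Qed.

Let kk : R := (m%:R)^-1.
Let kk0 : 0 <= kk.
Proof. by rewrite /kk invr_ge0. Qed.

Let gam : R := fine (robustness O Psi).
Let rfin : robustness O Psi = gam%:E.
Proof.
by rewrite /gam fineK // ge0_fin_numE // robust_ge0.
Qed.
Let gam0 : 0 <= gam.
Proof. by rewrite -lee_fin -rfin robust_ge0. Qed.

Lemma bound1 a A Phi : 0 <= A ->
  (forall Phi', O Phi' -> kk * `|Lf R N m S a Phi'| <= A) ->
  Ok O Psi K Phi -> kk * `|Lf R N m S a Phi| <= (1 + 2 * gam) ^+ K * A.
Proof.
move=> A0 hA hOk; have [s [hs hc hcnt eP]] := hOk; rewrite eP.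
apply: lim_pow => //; first by rewrite addr_ge0 // mulr_ge0.
move=> t t0.
have [l [l0 lt hrep]] := @robust_rep R N O Psi (gam + t / 2)
  ltac:(by rewrite rfin lte_fin ltrDl divr_gt0).
have hr := @rep_Ok R N O OL Ocomp Psi l s l0 hrep hs hc.
apply: (@rep_bound R N O m S a kk A _ _ kk0 A0 hA).
apply: (@rep_le R N O _ _ _ hr).
have l1 : 1 <= 1 + 2 * l by rewrite lerDl mulr_ge0.
apply: (le_trans (ler_weXn2l l1 hcnt)).
apply: lerXn2r; rewrite ?nnegrE; [lra | lra | lra].
Qed.


Lemma bound2 a A Phi G : gamma_max O = G%:E -> 0 <= A ->
  (forall Phi', O Phi' -> kk * `|Lf R N m S a Phi'| <= A) ->
  Ok O Psi K Phi -> kk * `|Lf R N m S a Phi| <= (1 + 2 * G) * A.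
Proof.
move=> hG A0 hA hOk.
have hle : (robustness O Phi <= G%:E)%E.
  rewrite -hG; apply: ereal_sup_ubound; exists Phi => //.
  exact: (@Ok_channel R N O Psi K Och Pch).
have G0 : 0 <= G by rewrite -lee_fin; apply: le_trans hle; exact: robust_ge0.
rewrite -[1 + 2 * G]expr1; apply: lim_pow => //; first by rewrite addr_ge0 // mulr_ge0.
move=> t t0.
have [l [l0 lt hrep]] := @robust_rep R N O Phi (G + t / 2)
  ltac:(by apply: (le_lt_trans hle); rewrite lte_fin ltrDl divr_gt0).
apply: (@rep_bound R N O m S a kk A _ _ kk0 A0 hA).
apply: (@rep_le R N O _ _ _ hrep); rewrite expr1; lra.
Qed.

Lemma gstar : exists g, [/\ gamma_star O Psi K = g%:E, 1 <= g &
  forall a A Phi, 0 <= A ->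
  (forall Phi', O Phi' -> kk * `|Lf R N m S a Phi'| <= A) ->
  Ok O Psi K Phi -> kk * `|Lf R N m S a Phi| <= g * A].
Proof.
have gmax0 : (robustness O Psi <= gamma_max O)%E.
  by apply: ereal_sup_ubound; exists Psi.
have b1 : 1 <= (1 + 2 * gam) ^+ K by rewrite exprn_ege1 // lerDl mulr_ge0.
case hG: (gamma_max O) gmax0 => [G||] gmax0.
- have G0 : gam <= G by rewrite -lee_fin -rfin.
  exists (Num.min ((1 + 2 * gam) ^+ K) (1 + 2 * G)); split.
  + by rewrite /gamma_star hG -EFin_min.
  + by rewrite le_min b1 lerDl mulr_ge0 //; have := gam0; lra.
  + move=> a A Phi A0 hA hOk; rewrite /Num.min; case: ifP => _.
      exact: bound1.
    exact: bound2 hG A0 hA hOk.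
- exists ((1 + 2 * gam) ^+ K); split => //.
  + rewrite /gamma_star hG gt0_muley ?lte_fin // addey // real_miney //.
  + by move=> *; exact: bound1.
- by have := le_trans (robust_ge0 _ _ _ _) gmax0.
Qed.


Lemma supE_ge0 (a : 'I_m -> R) : (0 <= ereal_sup
  [set ((m%:R)^-1 * `|\sum_(i < m) a i * h (S i)|)%:E | h in Fcls O])%E.
Proof.
case: O0 => Phi hPhi; apply: le_trans (ereal_sup_ubound _); last first.
  by exists (fPhi Phi) => //; exists Phi.
by rewrite lee_fin mulr_ge0.
Qed.

Lemma supE_mono (a : 'I_m -> R) : (ereal_sup
  [set ((m%:R)^-1 * `|\sum_(i < m) a i * h (S i)|)%:E | h in Fcls O] <=
  ereal_sup
  [set ((m%:R)^-1 * `|\sum_(i < m) a i * h (S i)|)%:E | h in Fcls (Ok O Psi K)])%E.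
Proof.
apply: le_ereal_sup => _ [h [Phi hPhi <-] <-]; exists (fPhi Phi) => //.
by exists Phi => //; exact: O_Ok.
Qed.

Lemma supE_bound (a : 'I_m -> R) : (ereal_sup
  [set ((m%:R)^-1 * `|\sum_(i < m) a i * h (S i)|)%:E | h in Fcls (Ok O Psi K)] <=
  gamma_star O Psi K * ereal_sup
  [set ((m%:R)^-1 * `|\sum_(i < m) a i * h (S i)|)%:E | h in Fcls O])%E.
Proof.
have [g [-> g1 hg]] := gstar.
have A0 := supE_ge0 a.
move: A0; set A := ereal_sup _; case hA: A => [r||] A0.
- apply: ge_ereal_sup => _ [h [Phi hPhi <-] <-].
  rewrite -EFinM lee_fin; apply: hg => //.
  move=> Phi' hPhi'; rewrite -lee_fin -hA; apply: ereal_sup_ubound.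
  by exists (fPhi Phi') => //; exists Phi'.
- by rewrite gt0_muley ?leey // lte_fin; lra.
- by [].
Qed.

Lemma main_sec : [/\ (rademacher S (Fcls O) <= rademacher S (Fcls (Ok O Psi K)))%E,
      (rademacher S (Fcls (Ok O Psi K)) <= gamma_star O Psi K * rademacher S (Fcls O))%E,
      (gaussian S (Fcls O) <= gaussian S (Fcls (Ok O Psi K)))%E &
      (gaussian S (Fcls (Ok O Psi K)) <= gamma_star O Psi K * gaussian S (Fcls O))%E].
Proof.
have [g [hg g1 _]] := gstar.
have c0 : (0 <= (((2 ^ m)%:R : R)^-1)%:E)%E by rewrite lee_fin invr_ge0.
split.
- rewrite /rademacher; apply: lee_wpmul2l => //; apply: lee_sum => eps _.
  exact: supE_mono.
- rewrite /rademacher.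
  have h := fun eps : {ffun 'I_m -> bool} => supE_bound (fun i => (-1) ^+ eps i).
  apply: le_trans; first exact: (lee_wpmul2l c0 (lee_sum _ (fun eps _ => h eps))).
  rewrite -ge0_sume_distrr; first by rewrite muleCA.
  by move=> eps _; exact: supE_ge0.
- rewrite /gaussian; apply: gexp_le => g'; [exact: supE_ge0 | exact: supE_mono].
- rewrite /gaussian hg.
  have g0 : 0 < g by lra.
  have hs := @gexp_scale R m _ g g0 (fun g' => supE_ge0 (fun i => g' i)).
  apply: le_trans hs.
  apply: gexp_le => g'.
    exact: le_trans (supE_ge0 _) (supE_mono _).
  by rewrite -hg; exact: supE_bound.
Qed.

End Final.

Theorem mainTheorem12 (R : realType) (n : nat) (O : set (qmap R (2 ^ n)))
  (Psi : qmap R (2 ^ n)) (k m : nat) (S : 'I_m -> 'I_(2 ^ n) * 'I_(2 ^ n)) :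
  O !=set0 ->
  (forall Phi, O Phi -> channel Phi) ->
  (forall Phi1 Phi2, O Phi1 -> O Phi2 -> O (Phi1 \o Phi2)) ->
  channel Psi ->
  (robustness O Psi < +oo)%E ->
  [/\ (rademacher S (Fcls O) <= rademacher S (Fcls (Ok O Psi k)))%E,
      (rademacher S (Fcls (Ok O Psi k)) <= gamma_star O Psi k * rademacher S (Fcls O))%E,
      (gaussian S (Fcls O) <= gaussian S (Fcls (Ok O Psi k)))%E &
      (gaussian S (Fcls (Ok O Psi k)) <= gamma_star O Psi k * gaussian S (Fcls O))%E].
Proof. by move=> h1 h2 h3 h4 h5; apply: main_sec. Qed.
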